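(* Let $\mathcal{M}=(E,\rho)$ be a $q$-matroid, $l=\dim\mathrm{cl}(0)$ and $f=\dim E-\dim\mathrm{cyc}(E)$. (a) There exists a full $q$-matroid $\mathcal{M}'$ such that $\mathcal{M}\approx\mathcal{U}_{0,l}\oplus\mathcal{U}_{f,f}\oplus\mathcal{M}'$. (b) If $\mathcal{M}\approx\mathcal{U}_{0,a}\oplus\mathcal{U}_{b,b}\oplus\mathcal{N}$ with $\mathcal{N}$ full, then $a=l$, $b=f$ and $\mathcal{N}\approx\mathcal{M}'$.
   Context: Let $\mathbb{F}=\mathbb{F}_q$. A $q$-matroid is $\mathcal{M}=(E,\rho)$, $E$ a finite-dimensional $\mathbb{F}$-vector space, $\rho$ from subspaces to $\mathbb{Z}_{\ge0}$ with $0\le\rho(V)\le\dim V$, monotone and submodular. Closure: $\mathrm{cl}(V)=\sum\{\langle x\rangle: \rho(V+\langle x\rangle)=\rho(V)\}$. Cyclic core: $\mathrm{cyc}(V)=\{x\in V\mid\rho(W)=\rho(V)\text{ for all }W\le V\text{ with }W+\langle x\rangle=V\}$. $\mathcal{M}$ is full if $\mathrm{cl}(0)=0$ and $\mathrm{cyc}(E)=E$. The uniform $q$-matroid $\mathcal{U}_k(E)$ has $\rho(V)=\min\{k,\dim V\}$; $\mathcal{U}_{0,n}$ and $\mathcal{U}_{n,n}$ denote $\mathcal{U}_0(E)$ and $\mathcal{U}_n(E)$ on some $n$-dimensional space $E$ (defined up to equivalence). Equivalence $\approx$: an $\mathbb{F}$-isomorphism of ground spaces preserving rank. Direct sum: for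 $E=E_1\oplus E_2$ with projections $\pi_i$, $\mathcal{M}_1\oplus\mathcal{M}_2=(E,\rho)$ with $\rho(V)=\dim V+\min_{X\le V}(\rho_1(\pi_1(X))+\rho_2(\pi_2(X))-\dim X)$; this is associative. *)

(* Defs.v *)
From HB Require Import structures.
From mathcomp Require Import all_boot all_order all_algebra all_field.

Set Implicit Arguments.
Unset Strict Implicit.
Unset Printing Implicit Defensive.

Import GRing.Theory Num.Theory.

(* The subspaces of a finite-dimensional space over a finite field form a
   finite type; we expose this through an alias of {vspace E}. *)
Definition qsubsp (F : finFieldType) (E : vectType F) : predArgType := @space F E.
HB.instance Definition _ (F : finFieldType) (E : vectType F) :=
  Finite.copy (@qsubsp F E) (can_type (@vector.VectorInternalTheory.vs2mxK F E)).



Definition is_qmatroid (F : finFieldType) (E : vectType F)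
    (rho : {vspace E} -> nat) : Prop :=
  [/\ forall V : {vspace E}, (rho V <= \dim V)%N,
      forall V W : {vspace E}, (V <= W)%VS -> (rho V <= rho W)%N
    & forall V W : {vspace E}, (rho (V + W)%VS + rho (V :&: W)%VS <= rho V + rho W)%N].

Definition qcl (F : finFieldType) (E : vectType F)
    (rho : {vspace E} -> nat) (V : {vspace E}) : {vspace E} :=
  (\sum_(x : finvect_type E | rho (V + <[x : E]>) == rho V) <[x : E]>)%VS.

Definition qcyc_mem (F : finFieldType) (E : vectType F)
    (rho : {vspace E} -> nat) (V : {vspace E}) (x : E) : bool :=
  (x \in V) &&
  [forall W : @qsubsp F E, ((W <= V)%VS && ((W + <[x]>)%VS == V)) ==> (rho W == rho V)].

(* cyc(V), as the subspace spanned by its elements (the set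
   {x | qcyc_mem rho V x} is itself a subspace). *)
Definition qcyc (F : finFieldType) (E : vectType F)
    (rho : {vspace E} -> nat) (V : {vspace E}) : {vspace E} :=
  (\sum_(x : finvect_type E | qcyc_mem rho V (x : E)) <[x : E]>)%VS.

Definition qfull (F : finFieldType) (E : vectType F)
    (rho : {vspace E} -> nat) : Prop :=
  qcl rho 0%VS = 0%VS /\ qcyc rho fullv = fullv.

Definition quniform (F : finFieldType) (E : vectType F) (k : nat)
    (V : {vspace E}) : nat := minn k (\dim V).

Definition qU (F : finFieldType) (k n : nat) : {vspace 'rV[F]_n} -> nat :=
  @quniform F 'rV[F]_n k.

Definition qequiv (F : finFieldType) (E1 E2 : vectType F)
    (rho1 : {vspace E1} -> nat) (rho2 : {vspace E2} -> nat) : Prop :=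
  exists g : 'Hom(E1, E2),
    [/\ lker g = 0%VS, limg g = fullv
      & forall V : {vspace E1}, rho2 (g @: V)%VS = rho1 V].

(* Direct sum on E = E1 (+) E2 (realised as E1 * E2) with projections pi_i:
   rho(V) = dim V + min_{X <= V} (rho1(pi1 X) + rho2(pi2 X) - dim X),
   computed in int (the value is a nonnegative integer: the min is at
   most 0, attained at X = 0 which justifies the neutral element 0, and
   at least -dim V), then returned as a nat. *)
Definition qdsum (F : finFieldType) (E1 E2 : vectType F)
    (rho1 : {vspace E1} -> nat) (rho2 : {vspace E2} -> nat)
    (V : {vspace (E1 * E2)%type}) : nat :=
  absz ((\dim V)%:Z +
        \big[Num.min/0%R]_(X : @qsubsp F (E1 * E2)%type | (X <= V)%VS)
           ((rho1 (linfun (@fst E1 E2) @: X)%VS)%:Z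
            + (rho2 (linfun (@snd E1 E2) @: X)%VS)%:Z - (\dim X)%:Z))%R.

(* Main.v *)
Require Import Defs.
From HB Require Import structures.
From mathcomp Require Import all_boot all_order all_algebra all_field zify.
Set Implicit Arguments. Unset Strict Implicit. Unset Printing Implicit Defensive.
Import GRing.Theory Num.Theory Order.TTheory.

Ltac revert_nat :=
  repeat match goal with
  | H : is_true (leq _ _) |- _ => revert H
  | H : @eq nat _ _ |- _ => revert H
  | H : @eq ?T _ _ |- _ => change T with nat in H; revert H
  end.
Ltac absd := repeat match goal with
  |- context [@dimv ?K ?T ?U] => let x := fresh "n" in set x : nat := @dimv K T U
  end.
Ltac absf f := repeat match goal with
  |- context [f ?U] => let x := fresh "n" in set x : nat := f U
  end.
Ltac clb := repeat match goal with x := _ |- _ => clearbody x end.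
Tactic Notation "nlia" := unfold reverse_coercion in *; revert_nat; absd; clb; intros; lia.
Tactic Notation "nlia" constr(f) := unfold reverse_coercion in *; revert_nat; absf f; absd; clb; intros; lia.
Tactic Notation "nlia" constr(f) constr(g) := unfold reverse_coercion in *; revert_nat; absf f; absf g; absd; clb; intros; lia.
Section Basics.
Variables (F : finFieldType) (E : vectType F) (rho : {vspace E} -> nat).
Hypothesis Hq : is_qmatroid rho.

Lemma rho_le_dim V : (rho V <= \dim V)%N. Proof. by case: Hq. Qed.
Lemma rho_mono V W : (V <= W)%VS -> (rho V <= rho W)%N. Proof. by case: Hq => _ h _; apply: h. Qed.
Lemma rho_submod V W : (rho (V + W)%VS + rho (V :&: W)%VS <= rho V + rho W)%N.
Proof. by case: Hq. Qed.
Lemma rho0 : rho 0%VS = 0%N.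
Proof. by have := rho_le_dim 0%VS; rewrite dimv0; lia. Qed.
Lemma rho_subadd V W : (rho (V + W)%VS <= rho V + rho W)%N.
Proof. by have := rho_submod V W; lia. Qed.

Lemma rho_drop U V : (U <= V)%VS -> (rho V <= rho U + (\dim V - \dim U))%N.
Proof.
move=> UV.
have e1 := addv_diff_cap V U. have e2 := dimv_cap_compl V U.
have e3 : (V :&: U = U)%VS by apply/capv_idPr.
rewrite e3 in e1 e2.
have := rho_subadd (V :\: U)%VS U; rewrite e1.
have := rho_le_dim (V :\: U)%VS. lia.
Qed.

Definition cl0 := qcl rho 0%VS.

Lemma rho_cl0 : rho cl0 = 0%N.
Proof.
rewrite /cl0 /qcl.
apply: (big_ind (fun X => rho X = 0%N)); first exact: rho0.
  by move=> X Y hX hY; have := rho_subadd X Y; rewrite hX hY; lia.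
by move=> x /eqP; rewrite add0v rho0.
Qed.

Lemma mem_cl0 v : (v \in cl0) = (rho <[v]>%VS == 0%N).
Proof.
apply/idP/idP.
  move=> vL; have := rho_mono vL; rewrite rho_cl0; lia.
move=> /eqP h; rewrite memvE /cl0 /qcl.
apply: (sumv_sup (v : finvect_type E)) => //.
by rewrite add0v h rho0.
Qed.

Lemma rho_addcl0 V : rho (V + cl0)%VS = rho V.
Proof.
apply/eqP; rewrite eqn_leq [(_ <= rho (V + _))%N]rho_mono ?addvSl // andbT.
by have := rho_subadd V cl0; rewrite rho_cl0 addn0.
Qed.

Definition tight (D : {vspace E}) := (rho D + (\dim (@fullv F E) - \dim D) <= rho fullv)%N.

Lemma tight_cap D1 D2 : tight D1 -> tight D2 -> tight (D1 :&: D2)%VS.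
Proof.
rewrite /tight => t1 t2.
have := rho_submod D1 D2.
have := rho_drop (subvf (D1 + D2)%VS).
have := dimv_sum_cap D1 D2.
have := dimvS (subvf (D1 + D2)%VS).
have := dimvS (subvf D1). have := dimvS (subvf D2).
have := dimvS (capvSl D1 D2).
lia.
Qed.

Lemma tightf : tight fullv.
Proof. by rewrite /tight subnn addn0. Qed.

Lemma min_tight : exists T, tight T /\ forall D, tight D -> (T <= D)%VS.
Proof.
have ex : exists n, [exists D : qsubsp E, tight D && (\dim D == n)].
  by exists (\dim (@fullv F E)); apply/existsP; exists (fullv : qsubsp E); rewrite tightf eqxx.
case: (ex_minnP ex) => n /existsP [T /andP [tT /eqP dT]] hmin.
exists T; split => // D tD.
have tTD := tight_cap tT tD.
have : (n <= \dim (T :&: D)%VS)%N.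
  by apply: hmin; apply/existsP; exists ((T :&: D)%VS : qsubsp E); rewrite tTD eqxx.
move=> h.
have : (T :&: D)%VS == T by rewrite eqEdim capvSl dT.
by move/eqP => <-; rewrite capvSr.
Qed.

Definition cycf := qcyc rho fullv.

Lemma cyc_mem_T T : tight T -> (forall D, tight D -> (T <= D)%VS) ->
  forall x, qcyc_mem rho fullv x = (x \in T).
Proof.
move=> tT Tmin x.
rewrite /qcyc_mem memvf /=.
apply/forallP/idP.
- move=> H; apply/negPn/negP => xT.
  pose U := (T + <[x]>)%VS.
  pose H0 := (T + U^C)%VS.
  have eHx : (H0 + <[x]> = fullv)%VS.
    by rewrite /H0 -addvA [(U^C + _)%VS]addvC addvA addv_complf.
  have dU : \dim U = (\dim T).+1.
    have := dimv_sum_cap T <[x]>%VS.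
    have -> : (T :&: <[x]> = 0)%VS.
      apply/eqP; rewrite -subv0; apply/subvP => y /memv_capP [yT /vlineP [k ey]]; subst y.
      rewrite memv0; apply/negPn/negP => hk.
      have : k != 0%R by apply: contraNneq hk => ->; rewrite scale0r.
      move=> knz; apply: (negP xT); rewrite -(scalerK knz x); exact: memvZ.
    have xnz : (x != 0%R) by apply: contraNneq xT => ->; rewrite mem0v.
    have d1 : \dim <[x]>%VS = 1%N by rewrite dim_vline xnz.
    rewrite d1 dimv0 /U; lia.
  have dH : (\dim H0 < \dim (@fullv F E))%N.
    have := dimv_sum_cap T (U^C)%VS; rewrite dimv_compl.
    have := dimvS (subvf U). rewrite /H0; lia.
  have xH : x \notin H0.
    apply: contraTN dH => xH; rewrite -leqNgt -eHx.
    by have -> : (H0 + <[x]> = H0)%VS by apply/addv_idPl; rewrite -memvE.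
  have rH : (rho H0 < rho fullv)%N.
    have := rho_drop (addvSl T (U^C)%VS).
    have := dimvS (addvSl T (U^C)%VS).
    move: tT dH; rewrite /tight /H0. lia.
  have := H (H0 : qsubsp E); rewrite subvf eHx eqxx /= => /eqP.
  lia.
- move=> xT W; apply/implyP => /andP [_ /eqP eW].
  have dW : (\dim (@fullv F E) <= (\dim W).+1)%N.
    rewrite -eW; have := dimv_sum_cap W <[x]>%VS; have := dim_vline x.
    case: (x != 0%R) => /= ->; lia.
  have mW := rho_mono (subvf W).
  have drW := rho_drop (subvf W).
  apply/negPn/negP => ne.
  have tW : tight W by rewrite /tight; move/eqP: ne; lia.
  have := Tmin _ tW => /subvP /(_ _ xT) xW.
  have eW' : W = fullv.
    by rewrite -eW; apply/esym/addv_idPl; rewrite -memvE.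
  by rewrite eW' eqxx in ne.
Qed.

Lemma cycf_spec : tight cycf /\ forall D, tight D -> (cycf <= D)%VS.
Proof.
have [T [tT Tmin]] := min_tight.
have -> : cycf = T.
  apply/eqP; rewrite eqEsubv; apply/andP; split.
    apply/subv_sumP => x; rewrite (cyc_mem_T tT Tmin) => xT; by rewrite -memvE.
  apply/subvP => v vT; rewrite memvE /cycf /qcyc.
  by apply: (sumv_sup (v : finvect_type E)) => //; rewrite (cyc_mem_T tT Tmin).
by [].
Qed.

Lemma mem_cycf v : (v \in cycf) = qcyc_mem rho fullv v.
Proof. by have [t m] := cycf_spec; rewrite (cyc_mem_T t m). Qed.

Lemma coloop V : rho V = (rho (V :&: cycf)%VS + (\dim V - \dim (V :&: cycf)%VS))%N.
Proof.
have [t _] := cycf_spec; move: t; rewrite /tight => t.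
have := rho_drop (capvSl V cycf).
have := rho_submod V cycf.
have := rho_drop (subvf (V + cycf)%VS).
have := dimv_sum_cap V cycf.
have := dimvS (subvf (V + cycf)%VS).
have := dimvS (capvSl V cycf).
lia.
Qed.

Lemma cl0_cyc : (cl0 <= cycf)%VS.
Proof.
apply/subvP => x; rewrite mem_cl0 mem_cycf => /eqP hx.
rewrite /qcyc_mem memvf /=; apply/forallP => W; apply/implyP => /andP [_ /eqP eW].
have := rho_subadd W <[x]>%VS; rewrite eW hx addn0.
have := rho_mono (subvf W). lia.
Qed.

End Basics.

Lemma linfunE' (F : fieldType) (aT rT : vectType F) (f : aT -> rT) :
  linear f -> forall x, linfun f x = f x.
Proof.
move=> Hf x.
pose lf : {linear aT -> rT} := HB.pack f (GRing.isLinear.Build _ _ _ _ f Hf).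
exact: (lfunE lf).
Qed.

Lemma bigmin_eq (I : finType) (P : pred I) (G : I -> int) (m : int) :
  (m <= 0)%R -> (forall i, P i -> (m <= G i)%R) -> (exists2 i, P i & G i = m) ->
  \big[Num.min/0%R]_(i | P i) G i = m.
Proof.
move=> m0 lb [i Pi Gi].
apply/eqP; rewrite eq_le; apply/andP; split.
  by rewrite (bigD1 i) //= ge_min Gi lexx.
by apply: (big_ind (fun y => m <= y)%R) => // x y; rewrite le_min => -> ->.
Qed.

Section DS.
Variables (F : finFieldType) (E1 E2 B : vectType F) (p : 'Hom(E1, B)).
Variables (r1 : {vspace E1} -> nat) (tau : {vspace E2} -> nat).
Hypothesis Hr1 : forall Y, r1 Y = \dim (p @: Y).
Hypothesis Ht : is_qmatroid tau.

Definition CZ := lker (p \o linfun (@fst E1 E2))%VF.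

Lemma dsum_formula V : qdsum r1 tau V =
  (\dim V - \dim (V :&: CZ) + tau (linfun (@snd E1 E2) @: (V :&: CZ)))%N.
Proof.
rewrite /qdsum; rewrite /reverse_coercion.
set VC := (V :&: CZ)%VS.
set sn := linfun (@snd E1 E2).
have dVC : (\dim VC <= \dim V)%N by apply: dimvS; apply: capvSl.
have kVC := limg_ker_dim sn VC.
have tVC := rho_le_dim Ht (sn @: VC)%VS.
rewrite (@bigmin_eq _ _ _ ((tau (sn @: VC)%VS)%:Z - (\dim VC)%:Z)%R).
- have -> : ((\dim V)%:Z + ((tau (sn @: VC)%VS)%:Z - (\dim VC)%:Z) =
     ((\dim V - \dim VC + tau (sn @: VC)%VS)%N)%:Z)%R by lia.
  by [].
- unfold reverse_coercion in *; lia.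
- move=> X XV.
  have e1 := Hr1 (linfun fst @: X)%VS.
  have e2 := limg_comp (linfun (@fst E1 E2)) p X.
  have e3 := limg_ker_dim (p \o linfun (@fst E1 E2))%VF X.
  have sXV : ((X :&: CZ) <= VC)%VS by apply: capvS.
  have d0 := dimvS sXV.
  have d1 := rho_drop Ht (limgS sn sXV).
  have kXC := limg_ker_dim sn (X :&: CZ)%VS.
  have d2 : (\dim ((X :&: CZ) :&: lker sn) <= \dim (VC :&: lker sn))%N by apply/dimvS/capvS.
  have m1 := rho_mono Ht (limgS sn (capvSl X CZ)).
  rewrite e1 -e2.
  move: e3; nlia tau.
- exists (VC : qsubsp (E1 * E2)%type); first exact: capvSl.
  have -> : (r1 (linfun fst @: VC)%VS = 0)%N.
    rewrite Hr1 -limg_comp.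
    have /eqP -> : ((p \o linfun fst) @: VC == 0)%VS by rewrite -lkerE capvSr.
    by rewrite dimv0.
  nlia tau.
Qed.
End DS.

Section Transport.
Variables (F : finFieldType) (E1 E2 : vectType F) (g : 'Hom(E1, E2)).
Hypotheses (kg : lker g = 0%VS) (ig : limg g = fullv).

Lemma gK V : (g^-1 @: (g @: V))%VS = V.
Proof. by rewrite -limg_comp lker0_compVf ?kg // lim1g. Qed.

Lemma gVK W : (g @: (g^-1 @: W))%VS = W.
Proof.
rewrite -limg_comp.
have -> : (g \o g^-1)%VF = \1%VF.
  by apply/lfunP => u; rewrite comp_lfunE id_lfunE limg_lfunVK // ig memvf.
by rewrite lim1g.
Qed.

Lemma ginv_ker : lker g^-1%VF = 0%VS.
Proof.
apply/eqP; rewrite -subv0; apply/subvP => u; rewrite memv_ker memv0 => /eqP h.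
by rewrite -[u](limg_lfunVK (f := g)) ?ig ?memvf // h linear0.
Qed.

Lemma dim_g V : \dim (g @: V) = \dim V.
Proof. by rewrite limg_dim_eq // kg capv0. Qed.

Lemma dim_ginv W : \dim (g^-1 @: W) = \dim W.
Proof. by rewrite limg_dim_eq // ginv_ker capv0. Qed.

Lemma mem_g w U : (w \in g @: U)%VS = (g^-1%VF w \in U).
Proof.
by rewrite memvE -{1}(gVK <[w]>%VS) limg_ker0 ?kg // limg_line -memvE.
Qed.

Variables (rho1 : {vspace E1} -> nat) (rho2 : {vspace E2} -> nat).
Hypothesis hg : forall V, rho2 (g @: V)%VS = rho1 V.

Lemma rho2E W : rho2 W = rho1 (g^-1 @: W)%VS.
Proof. by rewrite -hg gVK. Qed.

Lemma qm_transport : is_qmatroid rho1 -> is_qmatroid rho2.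
Proof.
case=> h1 h2 h3; split.
- by move=> V; rewrite rho2E -(dim_ginv V) h1.
- by move=> V W VW; rewrite !rho2E h2 // limgS.
- move=> V W; rewrite !rho2E limgD lker0_img_cap ?ginv_ker //; exact: h3.
Qed.

Lemma qequiv_sym_of : qequiv rho2 rho1.
Proof.
exists (g^-1)%VF; split; first exact: ginv_ker.
  by rewrite -{1}(gK fullv) ig.
by move=> W; rewrite rho2E.
Qed.

Hypothesis q1 : is_qmatroid rho1.
Let q2 := qm_transport q1.

Lemma cl_transport : qcl rho2 0%VS = (g @: qcl rho1 0%VS)%VS.
Proof.
apply/vspaceP => w.
rewrite mem_g (mem_cl0 q2) (mem_cl0 q1) rho2E limg_line.
by [].
Qed.

Lemma tight_transport D : tight rho2 (g @: D)%VS = tight rho1 D.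
Proof.
have e1 : \dim (@fullv _ E2) = \dim (@fullv _ E1) by rewrite -ig dim_g.
have e2 : rho2 fullv = rho1 fullv by rewrite -ig hg.
by rewrite /tight hg dim_g e1 e2.
Qed.

Lemma cyc_transport : qcyc rho2 fullv = (g @: qcyc rho1 fullv)%VS.
Proof.
have [t1 m1] := cycf_spec q1.
have [t2 m2] := cycf_spec q2.
rewrite /cycf in t1 m1 t2 m2.
apply/subv_anti/andP; split.
  by apply: m2; rewrite tight_transport.
rewrite -[X in (_ <= X)%VS](gVK (qcyc rho2 fullv)) limg_ker0 ?kg //.
by apply: m1; rewrite -tight_transport gVK.
Qed.

End Transport.

Lemma qequiv_sym (F : finFieldType) (E1 E2 : vectType F)
  (rho1 : {vspace E1} -> nat) (rho2 : {vspace E2} -> nat) :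
  qequiv rho1 rho2 -> qequiv rho2 rho1.
Proof. by case=> g [kg ig hg]; exact: (qequiv_sym_of kg ig hg). Qed.

Lemma qequiv_trans (F : finFieldType) (E1 E2 E3 : vectType F)
  (rho1 : {vspace E1} -> nat) (rho2 : {vspace E2} -> nat) (rho3 : {vspace E3} -> nat) :
  qequiv rho1 rho2 -> qequiv rho2 rho3 -> qequiv rho1 rho3.
Proof.
case=> g [kg ig hg] [h [kh ih hh]].
exists (h \o g)%VF; split.
- have /lker0P ig' : lker g == 0%VS by rewrite kg.
  have /lker0P ih' : lker h == 0%VS by rewrite kh.
  by apply/eqP/lker0P => x y; rewrite !comp_lfunE => /ih'/ig'.
- by rewrite limg_comp ig ih.
- by move=> V; rewrite limg_comp hh hg.
Qed.

Lemma qU_qm (F : finFieldType) (E : vectType F) (k : nat) : is_qmatroid (@quniform F E k).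
Proof.
rewrite /quniform; split.
- by move=> V; rewrite geq_minr.
- move=> V W VW; have := dimvS VW; lia.
- move=> V W.
  have := dimv_sum_cap V W.
  have := dimvS (capvSl V W). have := dimvS (capvSr V W).
  have := dimvS (addvSl V W). have := dimvS (addvSr V W).
  nlia.
Qed.

Lemma dim_rV (F : finFieldType) (n : nat) : \dim (@fullv F 'rV[F]_n) = n.
Proof. by rewrite dimvf /dim /= mul1n. Qed.

Lemma inner_formula (F : finFieldType) (a b : nat) (Y : {vspace ('rV[F]_a * 'rV[F]_b)%type}) :
  qdsum (@qU F 0 a) (@qU F b b) Y = \dim (linfun (@snd 'rV[F]_a 'rV[F]_b) @: Y).
Proof.
rewrite (@dsum_formula F _ _ 'rV[F]_a 0%R (@qU F 0 a) (@qU F b b)).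
- rewrite /CZ.
  have -> : lker ((0%R : 'Hom('rV[F]_a, 'rV[F]_a)) \o linfun (@fst 'rV[F]_a 'rV[F]_b))%VF = fullv.
    apply/vspaceP => z; rewrite memv_ker comp_lfunE zero_lfunE eqxx memvf //.
  rewrite capvf subnn add0n /qU /quniform.
  have := dimvS (subvf (linfun snd @: Y)%VS); rewrite dim_rV.
  nlia.
- by move=> Y'; rewrite lim0g dimv0 /qU /quniform min0n.
- exact: qU_qm.
Qed.

Section Zsec.
Variables (F : finFieldType) (a b : nat) (N : vectType F).
Local Notation Z := (('rV[F]_a * 'rV[F]_b) * N)%type.

Definition CZn : {vspace Z} := @CZ F _ N _ (linfun (@snd 'rV[F]_a 'rV[F]_b)).
Definition LA : {vspace Z} := (CZn :&: lker (linfun (@snd ('rV[F]_a * 'rV[F]_b)%type N)))%VS.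
Definition iotaf (y : N) : Z := ((0%R, 0%R), y).
Lemma iotaf_lin : linear iotaf.
Proof. by move=> k x y; rewrite /iotaf /=; congr (_, _); rewrite /= ?scaler0 ?addr0. Qed.
Definition iota : 'Hom(N, Z) := linfun iotaf.

Lemma iotaE y : iota y = ((0%R, 0%R), y).
Proof. by rewrite /iota linfunE' //; exact: iotaf_lin. Qed.

Lemma memCZ (z : Z) : (z \in CZn) = (z.1.2 == 0%R).
Proof. by rewrite memv_ker comp_lfunE !lfunE. Qed.

Lemma memLA (z : Z) : (z \in LA) = (z.1.2 == 0%R) && (z.2 == 0%R).
Proof. by rewrite memv_cap memCZ memv_ker lfunE. Qed.

Lemma snd_iota Y : (linfun snd @: (iota @: Y))%VS = Y.
Proof.
rewrite -limg_comp.
have -> : (linfun (@snd ('rV[F]_a * 'rV[F]_b)%type N) \o iota)%VF = \1%VF.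
  by apply/lfunP => y; rewrite comp_lfunE id_lfunE lfunE iotaE.
by rewrite lim1g.
Qed.

Lemma iota_CZ Y : (iota @: Y <= CZn)%VS.
Proof.
apply/subvP => z /memv_imgP [y _ ->]; by rewrite memCZ iotaE.
Qed.

Lemma iota_ker : lker iota = 0%VS.
Proof.
apply/eqP; rewrite -subv0; apply/subvP => y; rewrite memv_ker memv0 iotaE.
by move/eqP => h; apply/eqP; exact: (congr1 snd h).
Qed.

Lemma dim_Z : \dim (@fullv F Z) = (a + b + \dim (@fullv F N))%N.
Proof.
have ea : dim 'rV[F]_a = a by rewrite -dimvf dim_rV.
have eb : dim 'rV[F]_b = b by rewrite -dimvf dim_rV.
rewrite !dimvf.
change (dim 'rV[F]_a + dim 'rV[F]_b + dim N = a + b + dim N)%N.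
by rewrite ea eb.
Qed.

Lemma dim_CZ : \dim CZn = (a + \dim (@fullv F N))%N.
Proof.
have := limg_ker_dim (linfun (@snd 'rV[F]_a 'rV[F]_b) \o linfun (@fst _ N))%VF fullv.
have -> : limg (linfun (@snd 'rV[F]_a 'rV[F]_b) \o linfun (@fst _ N))%VF = fullv.
  apply/eqP; rewrite eqEsubv subvf /=; apply/subvP => w _.
  apply/memv_imgP; exists ((0%R, w), 0%R) => //; first exact: memvf.
  by rewrite comp_lfunE !lfunE.
rewrite capfv dim_Z dim_rV /CZn /CZ. nlia.
Qed.

Lemma dim_LA : \dim LA = a.
Proof.
have := limg_ker_dim (linfun (@snd ('rV[F]_a * 'rV[F]_b)%type N)) CZn.
have -> : (linfun (@snd ('rV[F]_a * 'rV[F]_b)%type N) @: CZn)%VS = fullv.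
  apply/eqP; rewrite eqEsubv subvf /=; apply/subvP => w _.
  apply/memv_imgP; exists (iota w); first by apply: (subvP (iota_CZ fullv)); apply: memv_img; apply: memvf.
  by rewrite lfunE iotaE.
rewrite dim_CZ /LA; nlia.
Qed.

Variable tau : {vspace N} -> nat.
Hypothesis Ht : is_qmatroid tau.
Definition Pz := qdsum (qdsum (@qU F 0 a) (@qU F b b)) tau.

Lemma P_formula V : Pz V =
  (\dim V - \dim (V :&: CZn) + tau (linfun (@snd ('rV[F]_a * 'rV[F]_b)%type N) @: (V :&: CZn)))%N.
Proof. by rewrite /Pz (dsum_formula (p := linfun (@snd 'rV[F]_a 'rV[F]_b))) //; apply: inner_formula. Qed.

Lemma P_CZ U : (U <= CZn)%VS -> Pz U = tau (linfun (@snd ('rV[F]_a * 'rV[F]_b)%type N) @: U).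
Proof. by move=> UC; rewrite P_formula; have /capv_idPl -> := UC; rewrite subnn. Qed.

Lemma P_iota Y : Pz (iota @: Y) = tau Y.
Proof. by rewrite P_CZ ?iota_CZ // snd_iota. Qed.

End Zsec.

Section Zfull.
Variables (F : finFieldType) (a b : nat) (N : vectType F).
Local Notation Z := (('rV[F]_a * 'rV[F]_b) * N)%type.
Variable tau : {vspace N} -> nat.
Hypothesis Ht : is_qmatroid tau.
Hypothesis Hf : qfull tau.
Hypothesis HP : is_qmatroid (@Pz F a b N tau).
Local Notation P := (@Pz F a b N tau).
Local Notation sn := (linfun (@snd ('rV[F]_a * 'rV[F]_b)%type N)).

Lemma snd_CZ : (sn @: CZn a b N)%VS = fullv.
Proof.
apply/eqP; rewrite eqEsubv subvf /=; apply/subvP => w _.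
apply/memv_imgP; exists (iota a b N w); first by rewrite memCZ iotaE.
by rewrite lfunE iotaE.
Qed.

Lemma tau_loopless y : tau <[y]>%VS = 0%N -> y = 0%R.
Proof.
move=> h; have : y \in qcl tau 0%VS by rewrite (mem_cl0 Ht) h.
by case: Hf => -> _; rewrite memv0 => /eqP.
Qed.

Lemma loops_P : qcl P 0%VS = LA a b N.
Proof.
apply/vspaceP => v; rewrite (mem_cl0 HP) memLA.
case: (boolP (v \in CZn a b N)) => vC.
- have vC' : (<[v]> <= CZn a b N)%VS by rewrite -memvE.
  rewrite (P_CZ Ht vC') limg_line lfunE /=.
  have -> : v.1.2 == 0%R by rewrite -memCZ.
  rewrite /=; apply/eqP/eqP => [/tau_loopless //| ->].
  have -> : (<[0%R]> = 0 :> {vspace N})%VS by apply/eqP; rewrite -dimv_eq0 dim_vline eqxx.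
  exact: rho0.
- have -> : (v.1.2 == 0%R) = false by apply/negbTE; rewrite -memCZ.
  rewrite P_formula //.
  have -> : (<[v]> :&: CZn a b N = 0)%VS.
    apply/eqP; rewrite -subv0; apply/subvP => w /memv_capP [/vlineP [k ->] wC].
    rewrite memv0; apply/negPn/negP => hk.
    have knz : k != 0%R by apply: contraNneq hk => ->; rewrite scale0r.
    move: vC; rewrite -(scalerK knz v); move/negP; apply; exact: memvZ.
  rewrite limg0 andFb; apply/negbTE/eqP.
  have t0 : tau 0%VS = 0%N := rho0 Ht.
  have xnz : v != 0%R by apply: contraNneq vC => ->; rewrite mem0v.
  have d1 : \dim <[v]>%VS = 1%N by rewrite dim_vline xnz.
  have d0 : \dim (0%VS : {vspace Z}) = 0%N by rewrite dimv0.
  rewrite d1 t0. nlia.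
Qed.

Lemma P_full : P fullv = (\dim (@fullv F Z) - \dim (CZn a b N) + tau fullv)%N.
Proof. by rewrite P_formula // capfv snd_CZ. Qed.

Lemma CZ_tight : tight P (CZn a b N).
Proof.
rewrite /tight P_full (P_CZ Ht (subvv _)) snd_CZ.
nlia tau.
Qed.

Lemma tight_CZ D : tight P D -> (CZn a b N <= D)%VS.
Proof.
rewrite /tight => tD.
have eD := P_formula Ht D.
have eF := P_full.
have s1 := dimvS (subvf D).
have s2 := dimvS (capvSl D (CZn a b N)).
have kD := limg_ker_dim sn (D :&: CZn a b N)%VS.
have s3 : (\dim ((D :&: CZn a b N) :&: lker sn) <= a)%N.
  have e := dim_LA a b N.
  have : ((D :&: CZn a b N) :&: lker sn <= LA a b N)%VS by apply/capvS => //; apply: capvSr.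
  move/dimvS; rewrite e; exact.
have dr := rho_drop Ht (subvf (sn @: (D :&: CZn a b N))%VS).
have dZ := dim_Z a b N. have dC := dim_CZ a b N.
have s4 := dimvS (subvf (D + CZn a b N)%VS).
have s5 := dimv_sum_cap D (CZn a b N).
have s6 := dimvS (subvf (sn @: (D :&: CZn a b N))%VS).
have tY : tight tau (sn @: (D :&: CZn a b N))%VS.
  rewrite /tight; move: tD; rewrite eD eF. nlia tau P.
have := (cycf_spec Ht).2 _ tY; rewrite /cycf; case: Hf => _ ->.
move=> fY; have s7 := dimvS fY.
have : (D :&: CZn a b N)%VS == CZn a b N.
  rewrite eqEdim capvSr /=. move: tD; rewrite eD eF. nlia tau P.
by move/eqP => <-; rewrite capvSl.
Qed.

Lemma cyc_P : qcyc P fullv = CZn a b N.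
Proof.
have [t m] := cycf_spec HP; rewrite /cycf in t m.
by apply/subv_anti/andP; split; [apply: m; exact: CZ_tight | exact: tight_CZ].
Qed.

End Zfull.

Section Uniq.
Variables (F : finFieldType) (a b a' b' : nat) (N N' : vectType F).
Variables (tau : {vspace N} -> nat) (tau' : {vspace N'} -> nat).
Hypotheses (Ht : is_qmatroid tau) (Ht' : is_qmatroid tau') (Hf : qfull tau) (Hf' : qfull tau').
Variable phi : 'Hom((('rV[F]_a * 'rV[F]_b) * N)%type, (('rV[F]_a' * 'rV[F]_b') * N')%type).
Hypotheses (kphi : lker phi = 0%VS) (iphi : limg phi = fullv).
Hypothesis hphi : forall V, @Pz F a' b' N' tau' (phi @: V)%VS = @Pz F a b N tau V.
Hypothesis HP : is_qmatroid (@Pz F a b N tau).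

Lemma uniq_main : [/\ a = a', b = b' & qequiv tau tau'].
Proof.
have HP' := qm_transport iphi hphi HP.
have eL := cl_transport kphi iphi hphi HP.
rewrite (loops_P Ht Hf HP) (loops_P Ht' Hf' HP') in eL.
have eC := cyc_transport kphi iphi hphi HP.
rewrite (cyc_P Ht Hf HP) (cyc_P Ht' Hf' HP') in eC.
have dL := dim_g kphi (LA a b N). rewrite -eL !dim_LA in dL.
have dC := dim_g kphi (CZn a b N). rewrite -eC !dim_CZ in dC.
have dZ := dim_g kphi fullv. rewrite iphi !dim_Z in dZ.
have ea : a = a' by [].
have eb : b = b' by lia.
have en : \dim (@fullv F N) = \dim (@fullv F N') by lia.
split => //.
pose k := (linfun (@snd ('rV[F]_a' * 'rV[F]_b')%type N') \o (phi \o iota a b N))%VF.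
have kE : forall y, k y = (phi (iota a b N y)).2 by move=> y; rewrite !comp_lfunE lfunE.
have kk : lker k = 0%VS.
  apply/eqP; rewrite -subv0; apply/subvP => y; rewrite memv_ker memv0 kE => /eqP h2.
  have inC : phi (iota a b N y) \in CZn a' b' N'.
    by rewrite eC; apply: memv_img; rewrite memCZ iotaE.
  have inL : phi (iota a b N y) \in LA a' b' N'.
    by rewrite memLA h2 eqxx andbT -memCZ.
  move: inL; rewrite eL (mem_g kphi iphi) lker0_lfunK ?kphi // memLA iotaE /=.
  by case/andP.
exists k; split => //.
  apply/eqP; rewrite eqEdim subvf /= limg_dim_eq ?kk ?capv0 //.
  by rewrite en.
move=> Y.
rewrite !limg_comp.
have sub : (phi @: (iota a b N @: Y) <= CZn a' b' N')%VS.
  by rewrite eC limg_ker0 ?kphi // iota_CZ.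
by rewrite -(P_CZ Ht' sub) hphi P_iota.
Qed.

End Uniq.

Section Zchar.
Variables (F : finFieldType) (a b : nat) (N : vectType F).
Local Notation Z := (('rV[F]_a * 'rV[F]_b) * N)%type.
Variable sigma : {vspace Z} -> nat.
Hypotheses (Hs : is_qmatroid sigma) (hcl : qcl sigma 0%VS = LA a b N)
  (hcyc : qcyc sigma fullv = CZn a b N).
Local Notation sn := (linfun (@snd ('rV[F]_a * 'rV[F]_b)%type N)).
Local Notation io := (iota a b N).

Definition taus (Y : {vspace N}) := sigma (io @: Y)%VS.

Lemma io_inj : lker io == 0%VS. Proof. by rewrite iota_ker. Qed.

Lemma taus_qm : is_qmatroid taus.
Proof.
case: Hs => h1 h2 h3; split.
- by move=> V; rewrite /taus -[X in (_ <= X)%N](limg_dim_eq (f := io)) ?iota_ker ?capv0 // h1.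
- by move=> V W VW; rewrite /taus h2 // limgS.
- by move=> V W; rewrite /taus limgD lker0_img_cap ?io_inj //; exact: h3.
Qed.

Lemma sigma_CZ U : (U <= CZn a b N)%VS -> sigma U = taus (sn @: U)%VS.
Proof.
move=> UC.
have e : (U + LA a b N = io @: (sn @: U) + LA a b N)%VS.
  apply/subv_anti/andP; split; rewrite subv_add addvSr andbT.
  - apply/subvP => u uU.
    have uC : u \in CZn a b N by apply: (subvP UC).
    rewrite -(subrK (io u.2) u) addrC; apply: memv_add.
      by apply: memv_img; apply/memv_imgP; exists u => //; rewrite lfunE.
    rewrite memLA iotaE /=; move: uC; rewrite memCZ => /eqP ->.
    by rewrite subr0 subrr !eqxx.
  - apply/subvP => z /memv_imgP [w /memv_imgP [u uU ->] ->].
    have uC : u \in CZn a b N by apply: (subvP UC).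
    rewrite lfunE -(subrK u (io u.2)) addrC; apply: memv_add => //.
    rewrite memLA iotaE /=; move: uC; rewrite memCZ => /eqP ->.
    by rewrite subr0 subrr !eqxx.
have h1 := rho_addcl0 Hs U. have h2 := rho_addcl0 Hs (io @: (sn @: U))%VS.
rewrite /cl0 hcl in h1 h2.
by rewrite /taus -h2 -e h1.
Qed.

Lemma sigma_eq W : sigma W = Pz taus W.
Proof.
rewrite (P_formula taus_qm) (coloop Hs W) /cycf hcyc sigma_CZ ?capvSr //.
have := dimvS (capvSl W (CZn a b N)). nlia.
Qed.

Lemma taus_cl : qcl taus 0%VS = 0%VS.
Proof.
apply/vspaceP => y; rewrite (mem_cl0 taus_qm) memv0 /taus limg_line -(mem_cl0 Hs) /cl0.
by rewrite hcl memLA iotaE /= eqxx.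
Qed.

Lemma sn_full : (sn @: fullv)%VS = fullv.
Proof.
apply/eqP; rewrite eqEsubv subvf /=; apply/subvP => w _.
by apply/memv_imgP; exists (io w); [exact: memvf | rewrite lfunE iotaE].
Qed.

Lemma taus_cyc : qcyc taus fullv = fullv.
Proof.
have [tT _] := cycf_spec taus_qm; rewrite /cycf in tT.
set T := qcyc taus fullv in tT *.
pose K0 := lker sn.
pose D := (io @: T + K0)%VS.
have capD : (io @: T :&: K0 = 0)%VS.
  apply/eqP; rewrite -subv0; apply/subvP => z /memv_capP [/memv_imgP [t _ ->]].
  by rewrite memv_ker lfunE iotaE /= => /eqP ->; rewrite -iotaE linear0 memv0.
have dD := dimv_sum_cap (io @: T)%VS K0.
rewrite capD dimv0 limg_dim_eq ?iota_ker ?capv0 // in dD.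
have dK := limg_ker_dim sn fullv. rewrite capfv sn_full in dK.
have dZ := dim_Z a b N. have dC := dim_CZ a b N.
have s4 := dimvS (subvf (D + CZn a b N)%VS).
have s5 := dimv_sum_cap D (CZn a b N).
have snD : (sn @: (D :&: CZn a b N) <= T)%VS.
  apply/subvP => w /memv_imgP [z /memv_capP [/memv_addP [z1 /memv_imgP [t tT' ->] [z2 z2K ->]] _] ->].
  move: z2K; rewrite /K0 memv_ker lfunE => /eqP h.
  by rewrite lfunE /= h addr0 iotaE.
have m1 := rho_mono taus_qm snD.
have eD := sigma_eq D. rewrite (P_formula taus_qm) in eD.
have eF := sigma_eq fullv. rewrite (P_formula taus_qm) capfv (snd_CZ a b N) in eF.
have tD : tight sigma D.
  move: tT; rewrite /tight eD eF. nlia taus.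
have [_ m] := cycf_spec Hs; rewrite /cycf hcyc in m.
have CD := m D tD.
apply/eqP; rewrite eqEsubv subvf /=; apply/subvP => y _.
have : io y \in D by apply: (subvP CD); rewrite memCZ iotaE.
case/memv_addP => z1 /memv_imgP [t tT' ->] [z2 z2K].
move: z2K; rewrite /K0 memv_ker lfunE => /eqP h.
move/(congr1 snd); rewrite /= !iotaE /= h addr0 => ->.
exact: tT'.
Qed.

Lemma taus_full : qfull taus.
Proof. by split; [exact: taus_cl | exact: taus_cyc]. Qed.

End Zchar.

Lemma rV_iso (F : finFieldType) (E : vectType F) (U : {vspace E}) (n : nat) :
  n = \dim U -> exists j : 'Hom('rV[F]_n, E), lker j = 0%VS /\ limg j = U.
Proof.
move=> ->.
pose e := vbasis U.
pose jf := fun u : 'rV[F]_(\dim U) => (\sum_(i < \dim U) u 0 i *: e`_i)%R.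
have jl : linear jf.
  move=> k x y; rewrite /jf scaler_sumr -big_split; apply: eq_bigr => i _.
  by rewrite !mxE scalerDl scalerA.
pose j := linfun jf.
have jE : forall u, j u = jf u by move=> u; rewrite linfunE'.
have kj : lker j = 0%VS.
  apply/eqP; rewrite -subv0; apply/subvP => u; rewrite memv_ker memv0 jE => /eqP h.
  apply/eqP/rowP => i; rewrite mxE.
  have := @coord_sum_free _ _ _ e (fun i0 => u ord0 i0) i (basis_free (vbasisP U)).
  by rewrite -/(jf u) h linear0 => <-.
exists j; split => //.
apply/eqP; rewrite eqEdim limg_dim_eq ?kj ?capv0 // dim_rV leqnn andbT.
apply/subvP => w /memv_imgP [u _ ->]; rewrite jE /jf.
apply: memv_suml => i _; apply: memvZ; apply: vbasis_mem; exact: memt_nth.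
Qed.

Lemma iso_build (F : finFieldType) (E : vectType F) (L C : {vspace E}) (l f m : nat) :
  (L <= C)%VS -> l = \dim L -> f = (\dim (@fullv F E) - \dim C)%N -> m = (\dim C - \dim L)%N ->
  exists h : 'Hom((('rV[F]_l * 'rV[F]_f) * 'rV[F]_m)%type, E),
  [/\ lker h = 0%VS, limg h = fullv, (h @: LA l f 'rV[F]_m)%VS = L & (h @: CZn l f 'rV[F]_m)%VS = C].
Proof.
move=> LC el ef em.
have [j1 [k1 i1]] := @rV_iso F E L l el.
have [j2 [k2 i2]] := @rV_iso F E (C^C)%VS f (etrans ef (esym (dimv_compl C))).
have dM : m = \dim (C :\: L)%VS.
  have := dimv_cap_compl C L; have /capv_idPr -> := LC. lia.
have [j3 [k3 i3]] := @rV_iso F E (C :\: L)%VS m dM.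
pose h : 'Hom((('rV[F]_l * 'rV[F]_f) * 'rV[F]_m)%type, E) := ((j1 \o (linfun (@fst 'rV[F]_l 'rV[F]_f) \o linfun (@fst _ 'rV[F]_m)))%VF
         + (j2 \o (linfun (@snd 'rV[F]_l 'rV[F]_f) \o linfun (@fst _ 'rV[F]_m)))%VF
         + (j3 \o linfun (@snd ('rV[F]_l * 'rV[F]_f)%type 'rV[F]_m))%VF)%R.
have hE : forall z : (('rV[F]_l * 'rV[F]_f) * 'rV[F]_m)%type, h z = (j1 z.1.1 + j2 z.1.2 + j3 z.2)%R.
  by move=> z; rewrite !add_lfunE !comp_lfunE !lfunE.
have m1 : forall x, j1 x \in L by move=> x; have := memv_img j1 (memvf x); rewrite i1.
have m2 : forall x, j2 x \in (C^C)%VS by move=> x; have := memv_img j2 (memvf x); rewrite i2.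
have m3 : forall x, j3 x \in (C :\: L)%VS by move=> x; have := memv_img j3 (memvf x); rewrite i3.
have m1C : forall x, j1 x \in C by move=> x; apply: (subvP LC).
have m3C : forall x, j3 x \in C by move=> x; apply: (subvP (diffvSl C L)).
have /lker0P inj1 : lker j1 == 0%VS by rewrite k1.
have /lker0P inj2 : lker j2 == 0%VS by rewrite k2.
have /lker0P inj3 : lker j3 == 0%VS by rewrite k3.
have kh : lker h = 0%VS.
  apply/eqP; rewrite -subv0; apply/subvP => z; rewrite memv_ker memv0 hE => /eqP hz.
  have e2 : j2 z.1.2 = 0%R.
    apply/eqP; rewrite -memv0 -(capv_compl C) memv_cap m2 andbT.
    have -> : j2 z.1.2 = (- (j1 z.1.1 + j3 z.2))%R.
      by apply/eqP; rewrite -addr_eq0 addrCA addrA hz.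
    by rewrite rpredN rpredD.
  have z12 : z.1.2 = 0%R by apply: inj2; rewrite e2 linear0.
  rewrite e2 addr0 in hz.
  have e1 : j1 z.1.1 = 0%R.
    apply/eqP; rewrite -memv0 -(capv_diff C L) memv_cap m1 andbT.
    have -> : j1 z.1.1 = (- j3 z.2)%R by apply/eqP; rewrite -addr_eq0 hz.
    by rewrite rpredN.
  have z11 : z.1.1 = 0%R by apply: inj1; rewrite e1 linear0.
  rewrite e1 add0r in hz.
  have z2 : z.2 = 0%R by apply: inj3; rewrite hz linear0.
  clear -z11 z12 z2; move: z11 z12 z2; case: z => [[x y] w] /= -> -> ->.
  by [].
have dZ := dim_Z l f 'rV[F]_m.
have ih : limg h = fullv.
  apply/eqP; rewrite eqEdim subvf /= limg_dim_eq ?kh ?capv0 //.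
  rewrite dZ dim_rV.
  have := dimvS LC. have := dimvS (subvf C). nlia.
exists h; split => //.
- apply/vspaceP => x; apply/memv_imgP/idP.
    case=> z; rewrite memLA => /andP [/eqP h1 /eqP h2] ->.
    by rewrite hE h1 h2 !linear0 !addr0.
  rewrite -i1 => /memv_imgP [u _ ->].
  exists ((u, 0%R), 0%R); first by rewrite memLA /= !eqxx.
  by rewrite hE /= !linear0 !addr0.
- apply/vspaceP => x; apply/memv_imgP/idP.
    case=> z; rewrite memCZ => /eqP h1 ->.
    by rewrite hE h1 linear0 addr0 rpredD.
  rewrite -{1}(addv_diff_cap C L) => /memv_addP [y yM [w wL ->]].
  have /capv_idPr eL := LC.
  rewrite eL -i1 in wL.
  rewrite -i3 in yM.
  case/memv_imgP: wL => u _ ->; case/memv_imgP: yM => s _ ->.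
  exists ((u, 0%R), s); first by rewrite memCZ.
  by rewrite hE /= linear0 addr0 addrC.
Qed.

Theorem theorem7p9 (F : finFieldType) (E : vectType F) (rho : {vspace E} -> nat) :
  is_qmatroid rho ->
  let l : nat := \dim (qcl rho 0%VS) in
  let f : nat := (\dim (@fullv F E) - \dim (qcyc rho fullv))%N in
  exists (E' : vectType F) (rho' : {vspace E'} -> nat),
    [/\ is_qmatroid rho', qfull rho',
        qequiv rho (qdsum (qdsum (@qU F 0 l) (@qU F f f)) rho')
      & forall (a b : nat) (N : vectType F) (rhoN : {vspace N} -> nat),
          is_qmatroid rhoN -> qfull rhoN ->
          qequiv rho (qdsum (qdsum (@qU F 0 a) (@qU F b b)) rhoN) ->
          [/\ a = l, b = f & qequiv rhoN rho']].
Proof.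
move=> Hq l f.
have LC := cl0_cyc Hq.
have [h [kh ih hL hC]] := @iso_build F E (qcl rho 0%VS) (qcyc rho fullv) l f
   (\dim (qcyc rho fullv) - \dim (qcl rho 0%VS)) LC erefl erefl erefl.
set m := (\dim (qcyc rho fullv) - \dim (qcl rho 0%VS))%N in h kh ih hL hC.
pose sigma := fun W => rho (h @: W)%VS.
have hs : forall V, rho (h @: V)%VS = sigma V by [].
have kh' : lker h == 0%VS by rewrite kh.
have Hs : is_qmatroid sigma.
  case: Hq => h1 h2 h3; split.
  - by move=> V; rewrite /sigma -[X in (_ <= X)%N](limg_dim_eq (f := h)) ?kh ?capv0 // h1.
  - by move=> V W VW; rewrite /sigma h2 // limgS.
  - by move=> V W; rewrite /sigma limgD lker0_img_cap //; exact: h3.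
have ecl := cl_transport kh ih hs Hs.
have hcl : qcl sigma 0%VS = LA l f 'rV[F]_m.
  by apply/eqP; rewrite -(eq_limg_ker0 _ _ kh') -ecl hL.
have ecy := cyc_transport kh ih hs Hs.
have hcy : qcyc sigma fullv = CZn l f 'rV[F]_m.
  by apply/eqP; rewrite -(eq_limg_ker0 _ _ kh') -ecy hC.
have e2 : qequiv rho (@Pz F l f 'rV[F]_m (taus sigma)).
  apply: qequiv_sym; exists h; split => // V.
  by rewrite -(sigma_eq Hs hcl hcy).
exists 'rV[F]_m, (taus sigma); split.
- exact: taus_qm.
- exact: taus_full.
- exact: e2.
move=> a b N rhoN HqN HfN Heq.
have e3 := qequiv_trans (qequiv_sym Heq) e2.
case: e3 => phi [kphi iphi hphi].
have HP : is_qmatroid (@Pz F a b N rhoN).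
  by case: Heq => g [kg ig hg]; exact: (qm_transport ig hg Hq).
have [ea eb eq] := uniq_main HqN (taus_qm Hs) HfN (taus_full Hs hcl hcy) kphi iphi hphi HP.
by split.
Qed.
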